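(* Let $(L,\le,(\sqsubseteq_\alpha)_{\alpha<\kappa})$ be a model of Axioms 1–4. Let $\alpha\le\kappa$, let $(x_\beta)_{\beta<\alpha}$ be a partial compatible sequence, and let $x=\bigvee_{\beta<\alpha}x_\beta$. If $z\in L$ satisfies $x_\beta\sqsubseteq_\beta z$ for all $\beta<\alpha$, then $x\sqsubseteq z$.
   Context: Setting (model of Axioms 1–4). Let $(L,\le)$ be a complete lattice with join operation $\bigvee$ and least element $\perp$. Let $\kappa>0$ be an ordinal, and for each ordinal $\alpha<\kappa$ let $\sqsubseteq_\alpha$ be a preorder on $L$. Derived relations: - $x=_\alpha y$ means $x\sqsubseteq_\alpha y$ and $y\sqsubseteq_\alpha x$. - $x\sqsubset_\alpha y$ means $x\sqsubseteq_\alpha y$ and not $x=_\alpha y$. - $\sqsubset=\bigcup_{\alpha<\kappa}\sqsubset_\alpha$. - $x\sqsubseteq y$ means $x\sqsubset y$ or $x=y$. Derived sets, for $x\in L$ and $\alpha<\kappa$: - $(x]_\alpha=\{y\in L:\forall\beta<\alpha,\ x=_\beta y\}$. - $[x]_\alpha=\{y\in L: x=_\alpha y\}$. For a set $X$, $X\sqsubseteq_\alpha y$ means $x\sqsubseteq_\alpha y$ for all $x\in X$. The structure is a model of Axioms 1–4 if: - (A1) for all $\alpha<\beta<\kappa$, $x\sqsubseteq_\beta y$ implies $x=_\alpha y$; - (A2) $\bigcap_{\alpha<\kappa}=_\alpha$ is the identity relation on $L$; - (A3) for every $x\in L$, every $\alpha<\kappa$ and every $X\subseteq(x]_\alpha$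 there is $y\in(x]_\alpha$ with $X\sqsubseteq_\alpha y$ such that for all $z\in(x]_\alpha$ with $X\sqsubseteq_\alpha z$ we have $y\sqsubseteq_\alpha z$ and $y\le z$; - (A4) for every nonempty $X\subseteq L$, every $\alpha<\kappa$ and every $y\in L$, if $y=_\alpha x$ for all $x\in X$ then $y=_\alpha\bigvee X$. For an ordinal $\alpha\le\kappa$, a sequence $(x_\beta)_{\beta<\alpha}$ is a partial compatible sequence if each $x_\beta$ is the $\le$-least element of $[x_\beta]_\beta$ and $x_\beta=_\beta x_\gamma$ for all $\beta<\gamma<\alpha$. *)

(* Defs.v *)
From Stdlib Require Import Classical.

(* Ordinals below kappa are modelled by a nonempty type [I] with a strict
   well-order [lt] (any well-order is order-isomorphic to an ordinal). *)
Definition strict_well_order {I : Type} (lt : I -> I -> Prop) : Prop :=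
  (forall a, ~ lt a a) /\
  (forall a b c, lt a b -> lt b c -> lt a c) /\
  (forall a b, lt a b \/ a = b \/ lt b a) /\
  well_founded lt.

(* An ordinal alpha <= kappa: [Some a] is the ordinal a < kappa,
   [None] is kappa itself.  [below lt b alpha] means b < alpha. *)
Definition below {I : Type} (lt : I -> I -> Prop) (b : I) (alpha : option I) : Prop :=
  match alpha with
  | None => True
  | Some a => lt b a
  end.

Definition complete_lattice {L : Type} (le : L -> L -> Prop)
  (join : (L -> Prop) -> L) : Prop :=
  (forall x, le x x) /\
  (forall x y z, le x y -> le y z -> le x z) /\
  (forall x y, le x y -> le y x -> x = y) /\
  (forall X : L -> Prop, (forall w, X w -> le w (join X)) /\
     (forall u, (forall w, X w -> le w u) -> le (join X) u)).

Definition preorder {L : Type} (r : L -> L -> Prop) : Prop :=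
  (forall x, r x x) /\ (forall x y z, r x y -> r y z -> r x z).

Section Derived.
Context {I L : Type} (lt : I -> I -> Prop) (sq : I -> L -> L -> Prop).

Definition eqa (a : I) (x y : L) : Prop := sq a x y /\ sq a y x.
Definition sqlta (a : I) (x y : L) : Prop := sq a x y /\ ~ eqa a x y.
Definition sqlt (x y : L) : Prop := exists a, sqlta a x y.
Definition sqle (x y : L) : Prop := sqlt x y \/ x = y.
Definition downset (x : L) (a : I) : L -> Prop :=
  fun y => forall b, lt b a -> eqa b x y.
Definition cls (x : L) (a : I) : L -> Prop := fun y => eqa a x y.

End Derived.

Definition model_A1_4 {I L : Type} (lt : I -> I -> Prop)
  (le : L -> L -> Prop) (join : (L -> Prop) -> L)
  (sq : I -> L -> L -> Prop) : Prop :=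
  (forall a b, lt a b -> forall x y, sq b x y -> eqa sq a x y) /\
  (forall x y, (forall a, eqa sq a x y) -> x = y) /\
  (forall (x : L) (a : I) (X : L -> Prop),
     (forall w, X w -> downset lt sq x a w) ->
     exists y, downset lt sq x a y /\ (forall w, X w -> sq a w y) /\
       (forall z, downset lt sq x a z -> (forall w, X w -> sq a w z) ->
          sq a y z /\ le y z)) /\
  (forall (X : L -> Prop), (exists w, X w) -> forall a y,
     (forall w, X w -> eqa sq a y w) -> eqa sq a y (join X)).

Definition partial_compatible {I L : Type} (lt : I -> I -> Prop)
  (le : L -> L -> Prop) (sq : I -> L -> L -> Prop)
  (alpha : option I) (xs : I -> L) : Prop :=
  (forall b, below lt b alpha ->
     cls sq (xs b) b (xs b) /\ (forall y, cls sq (xs b) b y -> le (xs b) y)) /\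
  (forall b c, lt b c -> below lt c alpha -> eqa sq b (xs b) (xs c)).

(* Main.v *)
Require Import Defs.
From Stdlib Require Import Classical.

Lemma wf_min {I : Type} (lt : I -> I -> Prop) (Hwf : well_founded lt)
  (P : I -> Prop) : forall a, P a -> exists m, P m /\ forall b, lt b m -> ~ P b.
Proof.
  intro a. induction a as [a IH] using (well_founded_ind Hwf). intro Pa.
  destruct (classic (exists b, lt b a /\ P b)) as [[b [Hb Pb]]|Hn].
  - exact (IH b Hb Pb).
  - exists a; split; [exact Pa|]. intros b Hb Pb; apply Hn; eauto.
Qed.

Theorem mainTheorem12 (I L : Type) (lt : I -> I -> Prop)
  (le : L -> L -> Prop) (join : (L -> Prop) -> L)
  (sq : I -> L -> L -> Prop)
  (Hwo : strict_well_order lt) (Hne : inhabited I)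
  (Hlat : complete_lattice le join)
  (Hpre : forall a, preorder (sq a))
  (Hmodel : model_A1_4 lt le join sq)
  (alpha : option I) (xs : I -> L)
  (Hxs : partial_compatible lt le sq alpha xs)
  (z : L)
  (Hz : forall b, below lt b alpha -> sq b (xs b) z) :
  sqle sq (join (fun w => exists b, below lt b alpha /\ w = xs b)) z.
Proof.
  destruct Hwo as [Hirr [Htr [Htot Hwf]]].
  destruct Hlat as [Lrefl [Ltr [Lanti Ljoin]]].
  destruct Hmodel as [A1 [A2 [A3 A4]]].
  destruct Hxs as [Hmin Hcomp].
  set (X := fun w => exists b, below lt b alpha /\ w = xs b).
  set (x := join X).
  assert (Erefl : forall a u, eqa sq a u u).
  { intros a u; split; apply (proj1 (Hpre a)). }
  assert (Esym : forall a u v, eqa sq a u v -> eqa sq a v u).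
  { intros a u v [h1 h2]; split; auto. }
  assert (Etr : forall a u v w, eqa sq a u v -> eqa sq a v w -> eqa sq a u w).
  { intros a u v w [h1 h2] [h3 h4]; split; eapply (proj2 (Hpre a)); eauto. }
  assert (Sbelow : forall c d, lt c d -> below lt d alpha -> below lt c alpha).
  { intros c d Hcd Hd; destruct alpha; simpl in *; eauto. }
  assert (Mono : forall c d, lt c d -> below lt d alpha -> le (xs c) (xs d)).
  { intros c d Hcd Hd. apply (proj2 (Hmin c (Sbelow c d Hcd Hd))).
    apply Hcomp; auto. }
  assert (Ub : forall b, below lt b alpha -> le (xs b) x).
  { intros b Hb. apply (proj1 (Ljoin X)). exists b; auto. }
  assert (Key : forall b, below lt b alpha -> eqa sq b (xs b) x).
  { intros b Hb.
    set (Xb := fun w => exists c, below lt c alpha /\ ~ lt c b /\ w = xs c).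
    assert (Hx : x = join Xb).
    { apply Lanti.
      - apply (proj2 (Ljoin X)). intros w [c [Hc ->]].
        destruct (classic (lt c b)) as [Hcb|Hcb].
        + eapply Ltr; [apply (Mono c b Hcb Hb)|].
          apply (proj1 (Ljoin Xb)). exists b; repeat split; auto.
        + apply (proj1 (Ljoin Xb)). exists c; auto.
      - apply (proj2 (Ljoin Xb)). intros w [c [Hc [_ ->]]].
        apply (proj1 (Ljoin X)). exists c; auto. }
    rewrite Hx. apply A4.
    - exists (xs b), b; repeat split; auto.
    - intros w [c [Hc [Hcb ->]]].
      destruct (Htot b c) as [H|[H|H]].
      + apply Hcomp; auto.
      + subst; apply Erefl.
      + contradiction. }
  destruct (classic (x = z)) as [Heq|Hneq]; [right; exact Heq|].
  assert (Hex : exists a, ~ eqa sq a x z).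
  { apply NNPP; intro Hn. apply Hneq, A2. intro a.
    apply NNPP; intro Hn2; apply Hn; eauto. }
  destruct Hex as [a0 Ha0].
  destruct (wf_min lt Hwf (fun a => ~ eqa sq a x z) a0 Ha0) as [m [Hm Hmin']].
  left; exists m; split; [|exact Hm].
  destruct (classic (below lt m alpha)) as [Hb|Hb].
  - eapply (proj2 (Hpre m)); [apply (proj2 (Key m Hb))|]. apply Hz; auto.
  - destruct alpha as [a|]; [|exfalso; apply Hb; exact Logic.I].
    simpl in Hb.
    assert (Hd : downset lt sq x m z).
    { intros b Hbm. apply NNPP; exact (Hmin' b Hbm). }
    destruct (A3 x m (fun _ => False) (fun w F => False_ind _ F)) as [y [Hy1 [_ Hy3]]].
    assert (Hyx : y = x).
    { apply Lanti.
      - apply (proj2 (Hy3 x (fun b _ => Erefl b x) (fun w F => False_ind _ F))).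
      - apply (proj2 (Ljoin X)). intros w [b [Hba ->]].
        simpl in Hba.
        assert (Hbm : lt b m).
        { destruct (Htot b m) as [H|[H|H]]; auto.
          - subst; contradiction.
          - exfalso; apply Hb; eauto. }
        apply (proj2 (Hmin b Hba)). unfold cls.
        eapply Etr; [apply (Key b Hba)|]. apply Hy1; auto. }
    rewrite <- Hyx. apply (proj1 (Hy3 z Hd (fun w F => False_ind _ F))).
Qed.
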